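(* Let $G=(V,E)$ be a $D$-regular unweighted Ricci-flat graph with $D\ge2$ and $\mu\equiv\mu_0>0$, and let $\alpha\in(0,1)$. Let $x_*\in V$ and $\psi:V\to\mathbb R$ with $\psi(x_* )>0$ and $\psi(y)>0$ for all $y\sim x_*$. Let $v:V\to\mathbb R$ be such that $M(x):=\psi(x)\mathcal L_\alpha(v)(x)$ satisfies $M(x_* )>0$ and $M(x_* )\ge M(y)$ for all $y\sim x_*$. Then $$\mathcal C_\alpha(v)(x_* )\ge F_\alpha(Lv(x_* ))-\frac1{\mu_0}\mathcal L_\alpha(v)(x_* )\sum_{y\sim x_*}e^{v(y)-v(x_* )}\frac{|\psi(x_* )-\psi(y)|}{\psi(y)},$$ where $F_\alpha(a)=\frac{D}{\mu_0^2}\exp\big(-\frac{\mu_0(1-\alpha)}Da\big)\big[\exp\big(\frac{2(1-\alpha)\mu_0}Da\big)+\frac{1-\alpha}\alpha\exp\big(-\frac{2\alpha\mu_0}Da\big)-\frac1\alpha\big]$.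
   Context: Unweighted: $w_{xy}=1$. $\Delta u(x)=\frac1{\mu_0}\sum_{y\sim x}(u(y)-u(x))$, $L=-\Delta$, $\Psi_H(v)(x)=\frac1{\mu_0}\sum_{y\sim x}H(v(y)-v(x))$, $\Upsilon'(z)=e^z-1$. $\mathcal L_\alpha(v)(x)=-\frac1\alpha\Psi_{\Upsilon'}(\alpha v)(x)$; $\mathcal C_\alpha(v)(x)=\frac1{\mu_0}\sum_{y\sim x}e^{\alpha(v(y)-v(x))}(\Psi_{\Upsilon'}(v)(y)-\Psi_{\Upsilon'}(v)(x))$. Ricci-flat: $G$ is $D$-regular and for every $x$, with $N(x)=\{x\}\cup\{y:y\sim x\}$, there exist $\eta_1,\dots,\eta_D:N(x)\to V$ with (i) $\eta_i(y)\sim y$; (ii) $\eta_i(y)\neq\eta_j(y)$ for $i\ne j$; (iii) for each $i$, $(\eta_i(\eta_j(x)))_j$ and $(\eta_j(\eta_i(x)))_j$ coincide as multisets. *)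

(* Defs.v *)
From Stdlib Require Import Reals Lra List Permutation.
Import ListNotations.
Open Scope R_scope.

Definition adj {V : Type} (nb : V -> list V) (x y : V) : Prop := In y (nb x).

Definition regular_simple_graph {V : Type} (nb : V -> list V) (D : nat) : Prop :=
  (forall x, NoDup (nb x)) /\
  (forall x, length (nb x) = D) /\
  (forall x y, adj nb x y -> adj nb y x) /\
  (forall x, ~ adj nb x x).

(* Ricci-flat (in the sense of Chung–Yau), for a D-regular graph. The maps
   eta_1..eta_D : N(x) -> V are indexed by i < D and given as total maps,
   with conditions imposed only on N(x) = {x} U {y : y ~ x}. *)
Definition ricci_flat {V : Type} (nb : V -> list V) (D : nat) : Prop :=
  regular_simple_graph nb D /\
  forall x : V, exists eta : nat -> V -> V,
    (forall i y, (i < D)%nat -> (y = x \/ adj nb x y) -> adj nb y (eta i y)) /\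
    (forall i j y, (i < D)%nat -> (j < D)%nat -> i <> j ->
        (y = x \/ adj nb x y) -> eta i y <> eta j y) /\
    (forall i, (i < D)%nat ->
        Permutation (map (fun j => eta i (eta j x)) (seq 0 D))
                    (map (fun j => eta j (eta i x)) (seq 0 D))).

Definition sum_nb {V : Type} (nb : V -> list V) (x : V) (f : V -> R) : R :=
  fold_right Rplus 0 (map f (nb x)).

(* unweighted, measure mu = mu0 constant *)
Definition Laplacian {V : Type} (nb : V -> list V) (mu0 : R) (u : V -> R) (x : V) : R :=
  / mu0 * sum_nb nb x (fun y => u y - u x).

Definition Lop {V : Type} (nb : V -> list V) (mu0 : R) (u : V -> R) (x : V) : R :=
  - Laplacian nb mu0 u x.

Definition PsiH {V : Type} (nb : V -> list V) (mu0 : R) (H : R -> R) (v : V -> R) (x : V) : R :=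
  / mu0 * sum_nb nb x (fun y => H (v y - v x)).

Definition Upsilon' (z : R) : R := exp z - 1.

Definition Lalpha {V : Type} (nb : V -> list V) (mu0 alpha : R) (v : V -> R) (x : V) : R :=
  - / alpha * PsiH nb mu0 Upsilon' (fun z => alpha * v z) x.

Definition Calpha {V : Type} (nb : V -> list V) (mu0 alpha : R) (v : V -> R) (x : V) : R :=
  / mu0 * sum_nb nb x (fun y =>
     exp (alpha * (v y - v x)) *
     (PsiH nb mu0 Upsilon' v y - PsiH nb mu0 Upsilon' v x)).

Definition Falpha (D : nat) (mu0 alpha a : R) : R :=
  INR D / (mu0 ^ 2) * exp (- (mu0 * (1 - alpha) / INR D) * a) *
  ( exp (2 * (1 - alpha) * mu0 / INR D * a)
    + (1 - alpha) / alpha * exp (- (2 * alpha * mu0 / INR D) * a)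
    - / alpha ).

(* Main.v *)
Require Import Defs.
From Stdlib Require Import Reals List.
From Coquelicot Require Import Coquelicot.
From Stdlib Require Import Reals Lra Lia Arith List Permutation.
Open Scope R_scope.


Lemma exp_le' x y : x <= y -> exp x <= exp y.
Proof. intros [H|H]. left; now apply exp_increasing. right; now subst. Qed.

Lemma exp_shift p w : exp p >= exp w * (1 + (p - w)).
Proof.
  replace (exp p) with (exp w * exp (p - w)) by (rewrite <- exp_plus; f_equal; ring).
  apply Rle_ge, Rmult_le_compat_l. left; apply exp_pos. apply exp_ineq1_le.
Qed.

Lemma amgm al p q : 0 < al < 1 ->
  exp (al*p + (1-al)*q) <= al * exp p + (1-al) * exp q.
Proof.
  intros Hal. set (w := al*p + (1-al)*q).
  pose proof (exp_shift p w). pose proof (exp_shift q w).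
  assert (al * exp p + (1-al) * exp q >= exp w * (al*(1+(p-w)) + (1-al)*(1+(q-w)))) by nra.
  replace (al*(1+(p-w)) + (1-al)*(1+(q-w))) with 1 in H1 by (unfold w; ring). lra.
Qed.

Definition mm (al s : R) : R :=
  exp ((1-al)/2*s) + (1-al)/al * exp (-((1+al)/2)*s) - /al * exp (-((1-al)/2)*s).
Definition dmm (al s : R) : R :=
  (1-al)/2*exp ((1-al)/2*s) - (1+al)/2*((1-al)/al) * exp (-((1+al)/2)*s)
  + (1-al)/2 * /al * exp (-((1-al)/2)*s).
Definition ddmm (al s : R) : R :=
  ((1-al)/2)^2*exp ((1-al)/2*s) + ((1+al)/2)^2*((1-al)/al) * exp (-((1+al)/2)*s)
  - ((1-al)/2)^2 * /al * exp (-((1-al)/2)*s).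

Lemma mm_nonneg al s : 0 < al < 1 -> 0 <= mm al s.
Proof.
  intros Hal. unfold mm.
  pose proof (amgm al ((1-al)/2*s) (-((1+al)/2)*s) Hal).
  replace (al * ((1 - al) / 2 * s) + (1 - al) * (- ((1 + al) / 2) * s))
    with (-((1-al)/2)*s) in H by field.
  assert (/al * exp (- ((1 - al) / 2) * s) <= /al * (al * exp ((1 - al) / 2 * s) +
     (1 - al) * exp (- ((1 + al) / 2) * s))).
  { apply Rmult_le_compat_l; [left; apply Rinv_0_lt_compat; lra | exact H]. }
  replace (/al * (al * exp ((1 - al) / 2 * s) + (1 - al) * exp (- ((1 + al) / 2) * s)))
    with (exp ((1 - al) / 2 * s) + (1-al)/al * exp (- ((1 + al) / 2) * s)) in H0 by (field; lra).
  lra.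
Qed.

Lemma ddmm_nonneg al s : 0 < al < 1 -> 0 <= ddmm al s.
Proof.
  intros Hal.
  assert (ddmm al s = ((1-al)/2)^2 * mm al s + (1-al) * exp (-((1+al)/2)*s)).
  { unfold ddmm, mm. field. lra. }
  rewrite H. pose proof (mm_nonneg al s Hal). pose proof (exp_pos (-((1+al)/2)*s)).
  assert (0 <= ((1-al)/2)^2) by (apply pow2_ge_0). nra.
Qed.

Lemma mm_derive al s : 0 < al < 1 -> is_derive (mm al) s (dmm al s).
Proof. intros Hal. unfold mm, dmm. auto_derive; auto. field. lra. Qed.

Lemma dmm_derive al s : 0 < al < 1 -> is_derive (dmm al) s (ddmm al s).
Proof. intros Hal. unfold dmm, ddmm. auto_derive; auto. field. lra. Qed.

Lemma cont_of_derive f df x : is_derive f x df -> continuity_pt f x.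
Proof.
  intros H. apply continuity_pt_filterlim.
  pose proof (ex_derive_continuous f x (ex_intro _ df H)) as Hc. exact Hc.
Qed.

Lemma mm_tangent al x0 y : 0 < al < 1 ->
  mm al y >= mm al x0 + dmm al x0 * (y - x0).
Proof.
  intros Hal.
  destruct (MVT_gen (mm al) x0 y (dmm al)) as [c [Hc Eq]].
  { intros; apply mm_derive; auto. }
  { intros; eapply cont_of_derive; apply mm_derive; auto. }
  destruct (MVT_gen (dmm al) x0 c (ddmm al)) as [c' [Hc' Eq']].
  { intros; apply dmm_derive; auto. }
  { intros; eapply cont_of_derive; apply dmm_derive; auto. }
  pose proof (ddmm_nonneg al c' Hal).
  assert (0 <= (c - x0) * (y - x0)).
  { unfold Rmin, Rmax in Hc; destruct (Rle_dec x0 y); nra. }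
  assert (mm al y - mm al x0 - dmm al x0 * (y - x0) = ddmm al c' * ((c - x0) * (y - x0))).
  { rewrite Eq. replace (dmm al c) with (dmm al x0 + ddmm al c' * (c - x0)) by lra. ring. }
  nra.
Qed.


Definition gg (al b c : R) : R :=
  exp ((1-al)*b) + (1-al)/al * exp (-al*b - c) - /al * exp (-(1-al)*c).

Lemma gg_factor al b c : 0 < al < 1 ->
  gg al b c = exp ((1-al)/2*(b-c)) * mm al (b+c).
Proof.
  intros Hal. unfold gg, mm.
  assert (e1 : exp ((1-al)*b) = exp ((1-al)/2*(b-c)) * exp ((1 - al) / 2 * (b + c)))
    by (rewrite <- exp_plus; f_equal; field).
  assert (e2 : exp (-al*b - c) = exp ((1-al)/2*(b-c)) * exp (- ((1 + al) / 2) * (b + c)))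
    by (rewrite <- exp_plus; f_equal; field).
  assert (e3 : exp (-(1-al)*c) = exp ((1-al)/2*(b-c)) * exp (- ((1 - al) / 2) * (b + c)))
    by (rewrite <- exp_plus; f_equal; field).
  rewrite e1, e2, e3. ring.
Qed.

Lemma gg_diag al b : 0 < al < 1 -> gg al b b = mm al (2*b).
Proof.
  intros Hal. rewrite gg_factor; auto. replace (b-b) with 0 by ring.
  rewrite Rmult_0_r, exp_0, Rmult_1_l. replace (b+b) with (2*b) by ring. reflexivity.
Qed.

Lemma gg_pair al b c : 0 < al < 1 -> gg al b c + gg al c b >= 2 * mm al (b+c).
Proof.
  intros Hal. rewrite !gg_factor; auto. replace (c+b) with (b+c) by ring.
  set (E := exp ((1 - al) / 2 * (b - c))). set (E' := exp ((1 - al) / 2 * (c - b))).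
  assert (EE : E * E' = 1).
  { unfold E, E'. rewrite <- exp_plus. replace ((1 - al) / 2 * (b - c) + (1 - al) / 2 * (c - b)) with 0 by ring. apply exp_0. }
  assert (0 < E) by apply exp_pos. assert (0 < E') by apply exp_pos.
  pose proof (mm_nonneg al (b+c) Hal).
  assert (0 <= E' * ((E-1)*(E-1))) by (apply Rmult_le_pos; [lra|apply Rle_0_sqr]).
  assert (E + E' >= 2).
  { replace (E' * ((E-1)*(E-1))) with ((E*E')*E - 2*(E*E') + E') in H2 by ring.
    rewrite EE in H2. lra. }
  nra.
Qed.

Lemma gg_super al b b' c c' : 0 < al < 1 -> b <= b' -> c <= c' ->
  gg al b c' + gg al b' c <= gg al b c + gg al b' c'.
Proof.
  intros Hal Hb Hc. unfold gg.
  assert (X: forall u w, exp (-al*u - w) = exp (-al*u) * exp (-w)).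
  { intros; rewrite <- exp_plus; f_equal; ring. }
  rewrite !X.
  assert (exp (-al*b') <= exp (-al*b)) by (apply exp_le'; nra).
  assert (exp (-c') <= exp (-c)) by (apply exp_le'; lra).
  assert (0 < (1-al)/al) by (apply Rdiv_lt_0_compat; lra).
  assert (0 <= (exp (-al*b) - exp (-al*b')) * (exp (-c) - exp (-c'))) by nra.
  nra.
Qed.

Definition sumL {A} (f : A -> R) (l : list A) : R := fold_right Rplus 0 (map f l).

Lemma sumL_perm {A} (f : A -> R) l l' : Permutation l l' -> sumL f l = sumL f l'.
Proof. unfold sumL; induction 1; simpl; try lra. Qed.

Lemma sumL_le_pointwise {A} (f h : A -> R) l :
  (forall x, In x l -> f x <= h x) -> sumL f l <= sumL h l.
Proof.
  induction l; simpl; intros H; unfold sumL in *; simpl. lra.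
  pose proof (H a (or_introl eq_refl)). assert (fold_right Rplus 0 (map f l) <= fold_right Rplus 0 (map h l)) by (apply IHl; auto). lra.
Qed.

Lemma extract {A} (p : A) l : In p l -> exists rest, Permutation l (p :: rest).
Proof.
  intros H. destruct (in_split _ _ H) as [l1 [l2 ->]]. exists (l1 ++ l2).
  symmetry; apply Permutation_middle.
Qed.

Lemma in_rest {A} (p q : A) l rest : Permutation l (p :: rest) -> In q l -> q <> p -> In q rest.
Proof.
  intros HP Hq Hne. apply (Permutation_in _ HP) in Hq. destruct Hq; [congruence|auto].
Qed.

Lemma exists_min (l : list R) : l <> nil -> exists m, In m l /\ forall y, In y l -> m <= y.
Proof.
  induction l as [|a l IH]; intros Hn; [congruence|].
  destruct l as [|b l'].
  - exists a; split; [left; auto|]. intros y [->|[]]; lra.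
  - destruct IH as [m [Hm Hmin]]; [discriminate|].
    destruct (Rle_dec a m).
    + exists a; split; [left; auto|]. intros y [->|Hy]; [lra|]. specialize (Hmin y Hy); lra.
    + exists m; split; [right; auto|]. intros y [->|Hy]; [lra|]. auto.
Qed.

Lemma exists_max (l : list R) : l <> nil -> exists m, In m l /\ forall y, In y l -> y <= m.
Proof.
  induction l as [|a l IH]; intros Hn; [congruence|].
  destruct l as [|b l'].
  - exists a; split; [left; auto|]. intros y [->|[]]; lra.
  - destruct IH as [m [Hm Hmax]]; [discriminate|].
    destruct (Rle_dec m a).
    + exists a; split; [left; auto|]. intros y [->|Hy]; [lra|]. specialize (Hmax y Hy); lra.
    + exists m; split; [right; auto|]. intros y [->|Hy]; [lra|]. auto.
Qed.

Definition GP (al : R) (p : R*R) := gg al (fst p) (snd p).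
Definition TP (al x0 K : R) (p : R*R) := mm al x0 + K * (fst p + snd p - x0).

Definition good (ps : list (R*R)) := Permutation (map fst ps) (map snd ps).

Lemma good_perm ps ps' : Permutation ps ps' -> good ps -> good ps'.
Proof.
  unfold good; intros HP H.
  apply Permutation_trans with (map fst ps). symmetry; apply Permutation_map; auto.
  apply Permutation_trans with (map snd ps); auto. apply Permutation_map; auto.
Qed.

Lemma pairs_main (al x0 K : R) (Hal : 0 < al < 1) (Htan : forall y, mm al y >= mm al x0 + K * (y - x0)) :
  forall n ps, length ps = n -> good ps -> sumL (TP al x0 K) ps <= sumL (GP al) ps.
Proof.
  induction n as [n IH] using lt_wf_ind. intros ps Hlen Hg.
  destruct ps as [|p0 ps0].
  { unfold sumL; simpl; lra. }
  set (ps := p0 :: ps0) in *.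
  destruct (exists_min (map fst ps)) as [bmin [Hmin_in Hmin]]; [discriminate|].
  destruct (exists_max (map fst ps)) as [bmax [Hmax_in Hmax]]; [discriminate|].
  assert (Hsnd : forall y, In y (map snd ps) -> In y (map fst ps)).
  { intros y Hy. apply (Permutation_in _ (Permutation_sym Hg)); auto. }
  destruct (Req_dec bmin bmax) as [Heq|Hne].
  {
    apply sumL_le_pointwise. intros [b c] Hbc.
    assert (b = bmin).
    { assert (In b (map fst ps)) by (apply (in_map fst) in Hbc; exact Hbc).
      pose proof (Hmin b H); pose proof (Hmax b H); lra. }
    assert (c = bmin).
    { assert (In c (map fst ps)) by (apply Hsnd; apply (in_map snd) in Hbc; exact Hbc).
      pose proof (Hmin c H0); pose proof (Hmax c H0); lra. }
    subst b c. unfold TP, GP; simpl. rewrite gg_diag by auto.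
    pose proof (Htan (2*bmin)). replace (bmin + bmin) with (2*bmin) by ring. lra. }
  assert (Hlt : bmin < bmax) by (pose proof (Hmax bmin Hmin_in); lra).
  assert (Step1 : exists rest1, good ((bmin,bmax)::rest1) /\ length rest1 = pred n /\
     sumL (TP al x0 K) ((bmin,bmax)::rest1) = sumL (TP al x0 K) ps /\
     sumL (GP al) ((bmin,bmax)::rest1) <= sumL (GP al) ps /\
     Permutation (map fst ((bmin,bmax)::rest1)) (map fst ps)).
  { apply in_map_iff in Hmin_in. destruct Hmin_in as [[b1 c1] [Hb1 Hin1]]. simpl in Hb1; subst b1.
    assert (Hmx2 : In bmax (map snd ps)) by (apply (Permutation_in _ Hg); auto).
    apply in_map_iff in Hmx2. destruct Hmx2 as [[b2 c2] [Hc2 Hin2]]. simpl in Hc2; subst c2.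
    destruct (extract _ _ Hin1) as [r1 Hr1].
    destruct (Req_dec c1 bmax) as [Hc1|Hc1].
    - subst c1. exists r1. split; [eapply good_perm; eauto|].
      split. { apply Permutation_length in Hr1. unfold ps in *; simpl in *; lia. }
      split. symmetry; apply sumL_perm; auto.
      split. right; symmetry; apply sumL_perm; auto.
      symmetry; apply Permutation_map; auto.
    - assert (In (b2,bmax) r1) by (eapply in_rest; eauto; intro E; inversion E; congruence).
      destruct (extract _ _ H) as [r2 Hr2].
      assert (HP : Permutation ps ((bmin,c1)::(b2,bmax)::r2)) by (eapply Permutation_trans; eauto).
      exists ((b2,c1)::r2). split.
      { unfold good in *. pose proof (good_perm _ _ HP Hg) as G2. unfold good in G2. simpl in *.
        eapply Permutation_trans. apply G2. apply perm_swap. }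
      split. { apply Permutation_length in HP. unfold ps in *; simpl in *; lia. }
      assert (Hb2 : bmin <= b2).
      { apply Hmin. apply (in_map fst) in Hin2; exact Hin2. }
      assert (Hc1' : c1 <= bmax).
      { apply Hmax. apply Hsnd. apply (in_map snd) in Hin1; exact Hin1. }
      rewrite (sumL_perm (TP al x0 K) _ _ HP), (sumL_perm (GP al) _ _ HP), (Permutation_map fst HP).
      unfold sumL, TP, GP; simpl. split; [lra|]. split.
      + pose proof (gg_super al bmin b2 c1 bmax Hal Hb2 Hc1'). lra.
      + apply Permutation_refl. }
  destruct Step1 as [rest1 [G1 [L1 [T1 [S1 P1]]]]].
  assert (Hfst1 : forall y, In y (map fst ((bmin,bmax)::rest1)) -> bmin <= y <= bmax).
  { intros y Hy. apply (Permutation_in _ P1) in Hy. split; auto. }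
  assert (Hsnd1 : forall y, In y (map snd ((bmin,bmax)::rest1)) -> bmin <= y <= bmax).
  { intros y Hy. apply Hfst1. apply (Permutation_in _ (Permutation_sym G1)); auto. }
  assert (Step2 : exists rest2, good ((bmin,bmax)::(bmax,bmin)::rest2) /\ length rest2 = pred (pred n) /\
     sumL (TP al x0 K) ((bmin,bmax)::(bmax,bmin)::rest2) = sumL (TP al x0 K) ((bmin,bmax)::rest1) /\
     sumL (GP al) ((bmin,bmax)::(bmax,bmin)::rest2) <= sumL (GP al) ((bmin,bmax)::rest1)).
  { assert (Hm3 : In bmax (map fst rest1)).
    { assert (In bmax (map fst ((bmin,bmax)::rest1))) by (apply (Permutation_in _ (Permutation_sym P1)); auto).
      destruct H; [simpl in H; lra|auto]. }
    assert (Hm4 : In bmin (map snd rest1)).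
    { assert (In bmin (map snd ((bmin,bmax)::rest1))).
      { apply (Permutation_in _ G1). left; reflexivity. }
      destruct H; [simpl in H; lra|auto]. }
    apply in_map_iff in Hm3. destruct Hm3 as [[b3 c3] [Hb3 Hin3]]. simpl in Hb3; subst b3.
    apply in_map_iff in Hm4. destruct Hm4 as [[b4 c4] [Hc4 Hin4]]. simpl in Hc4; subst c4.
    destruct (extract _ _ Hin3) as [r3 Hr3].
    destruct (Req_dec c3 bmin) as [Hc3|Hc3].
    - subst c3. exists r3.
      assert (HP : Permutation ((bmin,bmax)::rest1) ((bmin,bmax)::(bmax,bmin)::r3)) by (apply perm_skip; auto).
      split; [eapply good_perm; eauto|].
      split. { apply Permutation_length in HP. simpl in HP. rewrite L1 in HP. lia. }
      split; [symmetry; apply sumL_perm; auto|]. right; symmetry; apply sumL_perm; auto.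
    - assert (In (b4,bmin) r3) by (eapply in_rest; eauto; intro E; inversion E; congruence).
      destruct (extract _ _ H) as [r4 Hr4].
      assert (HP : Permutation ((bmin,bmax)::rest1) ((bmin,bmax)::(bmax,c3)::(b4,bmin)::r4)).
      { apply perm_skip. eapply Permutation_trans; [apply Hr3|]. apply perm_skip; auto. }
      exists ((b4,c3)::r4). split.
      { pose proof (good_perm _ _ HP G1) as G2. unfold good in *. simpl in *.
        eapply Permutation_trans. apply G2. apply perm_skip. apply perm_swap. }
      split. { apply Permutation_length in HP. simpl in *. rewrite L1 in HP. lia. }
      assert (Hb4 : b4 <= bmax).
      { apply Hfst1. right. apply (in_map fst) in Hin4; exact Hin4. }
      assert (Hc3' : bmin <= c3).
      { apply Hsnd1. right. apply (in_map snd) in Hin3; exact Hin3. }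
      rewrite (sumL_perm (TP al x0 K) _ _ HP), (sumL_perm (GP al) _ _ HP).
      unfold sumL, TP, GP; simpl. split; [lra|].
      pose proof (gg_super al b4 bmax bmin c3 Hal Hb4 Hc3'). lra. }
  destruct Step2 as [rest2 [G2 [L2 [T2 S2]]]].
  assert (Grest : good rest2).
  { unfold good in *. simpl in G2. apply Permutation_cons_inv with bmin.
    apply Permutation_cons_inv with bmax.
    eapply Permutation_trans; [apply perm_swap|]. apply G2. }
  assert (Hn : (0 < n)%nat) by (unfold ps in Hlen; simpl in Hlen; lia).
  assert (IHr : sumL (TP al x0 K) rest2 <= sumL (GP al) rest2) by (apply (IH (pred (pred n))); auto; lia).
  rewrite <- T1, <- T2. apply Rle_trans with (sumL (GP al) ((bmin,bmax)::(bmax,bmin)::rest2)); [|lra].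
  unfold sumL in *; simpl in *. unfold TP at 1 2, GP at 1 2; simpl.
  pose proof (gg_pair al bmin bmax Hal). pose proof (Htan (bmin + bmax)). lra.
Qed.


Lemma sumL_nil {X} (f : X -> R) : sumL f nil = 0.
Proof. reflexivity. Qed.
Lemma sumL_cons {X} (f : X -> R) a l : sumL f (a::l) = f a + sumL f l.
Proof. reflexivity. Qed.

Lemma sumL_ext {X} (f g : X -> R) l : (forall x, In x l -> f x = g x) -> sumL f l = sumL g l.
Proof. induction l; intros H; rewrite ?sumL_nil, ?sumL_cons; auto.
  rewrite H by (left; auto). rewrite IHl; auto. intros; apply H; right; auto. Qed.

Lemma sumL_plus {X} (f g : X -> R) l : sumL (fun x => f x + g x) l = sumL f l + sumL g l.
Proof. induction l; rewrite ?sumL_nil, ?sumL_cons; [lra|rewrite IHl; ring]. Qed.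

Lemma sumL_minus {X} (f g : X -> R) l : sumL (fun x => f x - g x) l = sumL f l - sumL g l.
Proof. induction l; rewrite ?sumL_nil, ?sumL_cons; [lra|rewrite IHl; ring]. Qed.

Lemma sumL_scal {X} (c : R) (f : X -> R) l : sumL (fun x => c * f x) l = c * sumL f l.
Proof. induction l; rewrite ?sumL_nil, ?sumL_cons; [lra|rewrite IHl; ring]. Qed.

Lemma sumL_const {X} (c : R) (l : list X) : sumL (fun _ => c) l = INR (length l) * c.
Proof. induction l; rewrite ?sumL_nil, ?sumL_cons; simpl length; [simpl; lra|rewrite IHl, S_INR; ring]. Qed.

Lemma sumL_le {X} (f g : X -> R) l : (forall x, In x l -> f x <= g x) -> sumL f l <= sumL g l.
Proof. apply sumL_le_pointwise. Qed.

Lemma sumL_nonneg_ge {X} (f : X -> R) l k : (forall x, In x l -> 0 <= f x) -> In k l -> f k <= sumL f l.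
Proof.
  induction l; intros H Hk; [destruct Hk|]. rewrite sumL_cons.
  assert (0 <= sumL f l).
  { apply Rle_trans with (sumL (fun _ => 0) l). rewrite sumL_const; lra.
    apply sumL_le. intros; apply H; right; auto. }
  destruct Hk as [->|Hk]. lra.
  pose proof (H a (or_introl eq_refl)). pose proof (IHl (fun x Hx => H x (or_intror Hx)) Hk). lra.
Qed.

Lemma sumL_swap {X Y} (F : X -> Y -> R) l1 l2 :
  sumL (fun j => sumL (fun i => F j i) l2) l1 = sumL (fun i => sumL (fun j => F j i) l1) l2.
Proof.
  induction l1; rewrite ?sumL_nil, ?sumL_cons.
  - transitivity (sumL (fun _ : Y => 0) l2); [rewrite sumL_const; ring|]. apply sumL_ext. intros; rewrite sumL_nil; auto.
  - rewrite IHl1, <- sumL_plus. apply sumL_ext. intros. rewrite sumL_cons. auto.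
Qed.

Lemma sumL_map {X Y} (f : Y -> R) (h : X -> Y) l : sumL f (map h l) = sumL (fun x => f (h x)) l.
Proof. unfold sumL; rewrite map_map; auto. Qed.

Lemma sumL_opp {X} (f : X -> R) l : sumL (fun x => - f x) l = - sumL f l.
Proof. induction l; rewrite ?sumL_nil, ?sumL_cons; [lra|rewrite IHl; ring]. Qed.

Definition Sm (n : nat) (F : nat -> R) := sumL F (seq 0 n).

Lemma Sm_plus n F G : Sm n F + Sm n G = Sm n (fun j => F j + G j).
Proof. unfold Sm; rewrite sumL_plus; auto. Qed.
Lemma Sm_swap n m (F : nat -> nat -> R) : Sm n (fun j => Sm m (fun i => F i j)) = Sm m (fun i => Sm n (fun j => F i j)).
Proof. unfold Sm. apply (sumL_swap (fun j i => F i j)). Qed.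

Lemma in_seq0 n j : In j (seq 0 n) <-> (j < n)%nat.
Proof. rewrite in_seq; lia. Qed.

Lemma tan_ineq al Bi Bj Cij : 0 < al < 1 ->
  exp (Cij - (1-al)*Bj) >= exp (al*Bj + Bi) + /al * exp ((1-al)*Bi) * (exp (al*Cij) - exp (al*Bi + al*Bj)).
Proof.
  intros Hal.
  pose proof (amgm al (Cij - (1-al)*(Bi+Bj)) (al*(Bi+Bj)) Hal).
  replace (al * (Cij - (1 - al) * (Bi + Bj)) + (1 - al) * (al * (Bi + Bj))) with (al*Cij) in H by ring.
  assert (E1 : exp (Cij - (1 - al) * (Bi + Bj)) = exp (Cij - (1-al)*Bj) * exp (-((1-al)*Bi)))
    by (rewrite <- exp_plus; f_equal; ring).
  assert (E2 : exp ((1-al)*Bi) * exp (-((1-al)*Bi)) = 1) by (rewrite <- exp_plus; replace ((1 - al) * Bi + - ((1 - al) * Bi)) with 0 by ring; apply exp_0).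
  assert (E3 : exp ((1-al)*Bi) * exp (al*(Bi+Bj)) = exp (al*Bj + Bi)) by (rewrite <- exp_plus; f_equal; ring).
  assert (E4 : exp (al*Bi + al*Bj) = exp (al*(Bi+Bj))) by (f_equal; ring).
  rewrite E4. rewrite E1 in H.
  set (P := exp ((1-al)*Bi)) in *. set (Q := exp (-((1-al)*Bi))) in *.
  set (Z := exp (al*(Bi+Bj))) in *. set (W := exp (Cij - (1-al)*Bj)) in *.
  set (Y := exp (al*Cij)) in *. set (V := exp (al*Bj + Bi)) in *.
  assert (0 < P) by apply exp_pos.
  assert (HP: P * Y <= al * W + (1-al) * V).
  { apply Rle_trans with (P * (al * (W * Q) + (1 - al) * Z)). apply Rmult_le_compat_l; lra.
    replace (P * (al * (W * Q) + (1 - al) * Z)) with (al * W * (P*Q) + (1-al) * (P*Z)) by ring.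
    rewrite E2, E3. lra. }
  assert (/al * P * (Y - Z) = /al * (P*Y) - /al * (P * Z)) by ring.
  rewrite H1, E3.
  assert (/al * (P*Y) <= /al * (al * W + (1-al) * V)) by (apply Rmult_le_compat_l; [left; apply Rinv_0_lt_compat; lra|auto]).
  replace (/al * (al * W + (1-al) * V)) with (W + (1-al)/al * V) in H2 by (field; lra).
  apply Rle_ge. replace (V + (/ al * (P * Y) - / al * V)) with (/al * (P*Y) - (1-al)/al * V) by (field; lra).
  lra.
Qed.

Lemma core (D : nat) (al : R) (Bv : nat -> R) (Cv : nat -> nat -> R) (ev : nat -> R) (sg : nat -> nat) :
  0 < al < 1 -> (0 < D)%nat ->
  Permutation (map sg (seq 0 D)) (seq 0 D) ->
  (forall j, (j < D)%nat -> (sg j < D)%nat) ->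
  (forall j, (j < D)%nat -> Cv (sg j) j = 0) ->
  (forall j, (j < D)%nat -> Sm D (fun i => exp (al * Cv i j)) >=
       exp (al * Bv j) * (Sm D (fun k => exp (al * Bv k)) - ev j * (INR D - Sm D (fun k => exp (al * Bv k))))) ->
  (forall i, (i < D)%nat -> Sm D (fun j => exp (al * Cv i j)) = Sm D (fun j => exp (al * Cv j i))) ->
  Sm D (fun j => Sm D (fun i => exp (Cv i j - (1-al) * Bv j)))
    - Sm D (fun k => exp (al * Bv k)) * Sm D (fun k => exp (Bv k))
  >= INR D * mm al (2 * (- Sm D Bv / INR D))
     - /al * (INR D - Sm D (fun k => exp (al * Bv k))) * Sm D (fun i => exp (Bv i) * ev i).
Proof.
  intros Hal HD Hperm Hsg HC0 Hcon Hswap.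
  set (Sa := Sm D (fun k => exp (al * Bv k))).
  set (S1 := Sm D (fun k => exp (Bv k))).
  set (Err := Sm D (fun i => exp (Bv i) * ev i)).
  set (tan := fun i j => exp (al*Bv j + Bv i) + /al * exp ((1-al)*Bv i) * (exp (al*Cv i j) - exp (al*Bv i + al*Bv j))).
  set (act := fun i j => exp (Cv i j - (1-al) * Bv j)).
  assert (SA : forall j, (j < D)%nat ->
     Sm D (fun i => act i j) >= Sm D (fun i => tan i j) + gg al (- Bv j) (- Bv (sg j))).
  { intros j Hj.
    assert (Sm D (fun i => act i j) = Sm D (fun i => tan i j) + Sm D (fun i => act i j - tan i j)).
    { unfold Sm. rewrite sumL_minus. ring. }
    rewrite H.
    assert (act (sg j) j - tan (sg j) j <= Sm D (fun i => act i j - tan i j)).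
    { apply (sumL_nonneg_ge (fun i => act i j - tan i j)).
      - intros i _. unfold act, tan. pose proof (tan_ineq al (Bv i) (Bv j) (Cv i j) Hal). lra.
      - apply in_seq0; auto. }
    assert (act (sg j) j - tan (sg j) j = gg al (- Bv j) (- Bv (sg j))).
    { unfold act, tan, gg. rewrite HC0 by auto. rewrite Rmult_0_r, exp_0.
      assert (e1 : exp ((1-al) * - Bv j) = exp (0 - (1-al) * Bv j)) by (f_equal; ring).
      assert (e2 : exp (- al * - Bv j - - Bv (sg j)) = exp (al * Bv j + Bv (sg j))) by (f_equal; ring).
      assert (e3 : exp (- (1-al) * - Bv (sg j)) = exp ((1-al) * Bv (sg j))) by (f_equal; ring).
      assert (e4 : exp ((1-al) * Bv (sg j)) * exp (al * Bv (sg j) + al * Bv j) = exp (al * Bv j + Bv (sg j)))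
        by (rewrite <- exp_plus; f_equal; ring).
      rewrite e1, e2, e3.
      replace (/ al * exp ((1 - al) * Bv (sg j)) * (1 - exp (al * Bv (sg j) + al * Bv j)))
        with (/ al * exp ((1 - al) * Bv (sg j)) - / al * (exp ((1 - al) * Bv (sg j)) * exp (al * Bv (sg j) + al * Bv j))) by ring.
      rewrite e4. field. lra. }
    lra. }
  assert (SB : forall i, (i < D)%nat ->
     Sm D (fun j => tan i j) >= exp (Bv i) * Sa - /al * (INR D - Sa) * (exp (Bv i) * ev i)).
  { intros i Hi.
    assert (E1 : forall j, tan i j = exp (Bv i) * exp (al * Bv j) + /al * exp ((1-al)*Bv i) * exp (al * Cv i j)
        - /al * exp (Bv i) * exp (al * Bv j)).
    { intros j. unfold tan.
      assert (exp (al * Bv j + Bv i) = exp (Bv i) * exp (al * Bv j)) by (rewrite <- exp_plus; f_equal; ring).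
      assert (exp ((1-al)*Bv i) * exp (al * Bv i + al * Bv j) = exp (Bv i) * exp (al * Bv j))
        by (rewrite <- !exp_plus; f_equal; ring).
      rewrite H. replace (/ al * exp ((1 - al) * Bv i) * (exp (al * Cv i j) - exp (al * Bv i + al * Bv j)))
        with (/ al * exp ((1 - al) * Bv i) * exp (al * Cv i j) - /al * (exp ((1 - al) * Bv i) * exp (al * Bv i + al * Bv j))) by ring.
      rewrite H0. ring. }
    assert (Sm D (fun j => tan i j) = exp (Bv i) * Sa + /al * exp ((1-al)*Bv i) * Sm D (fun j => exp (al * Cv i j))
        - /al * exp (Bv i) * Sa).
    { unfold Sm, Sa. rewrite (sumL_ext _ _ _ (fun j _ => E1 j)). rewrite !sumL_minus, !sumL_plus, !sumL_scal.
      fold (Sm D (fun k => exp (al * Bv k))). unfold Sm. ring. }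
    rewrite H, Hswap by auto.
    pose proof (Hcon i Hi). fold Sa in H0.
    assert (exp ((1-al)*Bv i) * exp (al * Bv i) = exp (Bv i)) by (rewrite <- exp_plus; f_equal; ring).
    assert (0 < /al * exp ((1-al)*Bv i)) by (apply Rmult_lt_0_compat; [apply Rinv_0_lt_compat; lra| apply exp_pos]).
    assert (/al * exp ((1-al)*Bv i) * Sm D (fun j => exp (al * Cv j i)) >=
            /al * exp ((1-al)*Bv i) * (exp (al * Bv i) * (Sa - ev i * (INR D - Sa)))).
    { apply Rle_ge, Rmult_le_compat_l; lra. }
    replace (/al * exp ((1-al)*Bv i) * (exp (al * Bv i) * (Sa - ev i * (INR D - Sa))))
      with (/al * (exp ((1-al)*Bv i) * exp (al * Bv i)) * (Sa - ev i * (INR D - Sa))) in H3 by ring.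
    rewrite H1 in H3. nra. }
  assert (SD : Sm D (fun j => gg al (- Bv j) (- Bv (sg j))) >= INR D * mm al (2 * (- Sm D Bv / INR D))).
  { set (x0 := 2 * (- Sm D Bv / INR D)).
    set (ps := map (fun j => (- Bv j, - Bv (sg j))) (seq 0 D)).
    assert (Hg : good ps).
    { unfold good, ps. rewrite !map_map. simpl.
      replace (map (fun x => - Bv (sg x)) (seq 0 D)) with (map (fun k => - Bv k) (map sg (seq 0 D))) by (rewrite map_map; auto).
      apply Permutation_map. symmetry; auto. }
    pose proof (pairs_main al x0 (dmm al x0) Hal (fun y => mm_tangent al x0 y Hal) (length ps) ps eq_refl Hg).
    unfold ps in H. rewrite !sumL_map in H. simpl in H.
    unfold Sm. apply Rle_ge. eapply Rle_trans; [|apply H].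
    unfold TP. simpl. rewrite sumL_plus, sumL_const, length_seq, sumL_scal, !sumL_minus, sumL_const, length_seq, sumL_plus.
    assert (sumL (fun x => - Bv (sg x)) (seq 0 D) = - Sm D Bv).
    { transitivity (sumL (fun k => - Bv k) (map sg (seq 0 D))). rewrite sumL_map; auto.
      rewrite (sumL_perm _ _ _ Hperm). unfold Sm. apply sumL_opp. }
    rewrite H0. assert (sumL (fun x => - Bv x) (seq 0 D) = - Sm D Bv).
    { unfold Sm. apply sumL_opp. }
    rewrite H1. unfold x0. assert (0 < INR D) by (apply lt_0_INR; lia).
    right. field. lra. }
  assert (Sm D (fun j => Sm D (fun i => act i j)) >= Sm D (fun j => Sm D (fun i => tan i j)) + Sm D (fun j => gg al (- Bv j) (- Bv (sg j)))).
  { rewrite Sm_plus. apply Rle_ge, sumL_le. intros j Hj. apply in_seq0 in Hj. apply Rge_le, SA; auto. }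
  assert (Sm D (fun j => Sm D (fun i => tan i j)) >= S1 * Sa - /al * (INR D - Sa) * Err).
  { rewrite Sm_swap.
    apply Rle_ge. apply Rle_trans with (Sm D (fun i => exp (Bv i) * Sa - /al * (INR D - Sa) * (exp (Bv i) * ev i))).
    - unfold Sm. rewrite sumL_minus, (sumL_scal (/al * (INR D - Sa))).
      rewrite (sumL_ext (fun i => exp (Bv i) * Sa) (fun i => Sa * exp (Bv i))) by (intros; ring).
      rewrite sumL_scal. unfold S1, Err, Sm. right; ring.
    - apply sumL_le. intros i Hi. apply in_seq0 in Hi. apply Rge_le, SB; auto. }
  unfold act in H. fold Sa S1 Err. lra.
Qed.


Lemma nodup_inj {X Y} (f : X -> Y) l a b : NoDup (map f l) -> In a l -> In b l -> f a = f b -> a = b.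
Proof.
  induction l as [|c l IH]; simpl; intros Hnd Ha Hb Hf; [destruct Ha|].
  inversion Hnd; subst.
  destruct Ha as [<-|Ha]; destruct Hb as [<-|Hb]; auto.
  - exfalso; apply H1; rewrite Hf; apply in_map; auto.
  - exfalso; apply H1; rewrite <- Hf; apply in_map; auto.
Qed.

Lemma nodup_map_seq {Y} (h : nat -> Y) D :
  (forall i j, (i < D)%nat -> (j < D)%nat -> i <> j -> h i <> h j) -> NoDup (map h (seq 0 D)).
Proof.
  intros H. apply NoDup_map_NoDup_ForallPairs; [|apply seq_NoDup].
  intros a b Ha Hb Hab. apply in_seq0 in Ha; apply in_seq0 in Hb.
  destruct (Nat.eq_dec a b) as [e|n]; auto. exfalso; exact (H a b Ha Hb n Hab).
Qed.

Lemma perm_decode {V} (nb : V -> list V) (y : V) (D : nat) (h : nat -> V) :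
  NoDup (nb y) -> length (nb y) = D -> (forall i, (i < D)%nat -> adj nb y (h i)) ->
  (forall i j, (i < D)%nat -> (j < D)%nat -> i <> j -> h i <> h j) ->
  Permutation (map h (seq 0 D)) (nb y).
Proof.
  intros Hnd Hl Hadj Hdis. apply NoDup_Permutation_bis.
  - apply nodup_map_seq; auto.
  - rewrite length_map, length_seq; lia.
  - intros w Hw. apply in_map_iff in Hw. destruct Hw as [i [<- Hi]]. apply in_seq0 in Hi. apply Hadj; auto.
Qed.

Lemma finite_choice (n : nat) (Q : nat -> nat -> Prop) :
  (forall j, (j < n)%nat -> exists i, Q j i) -> exists f, forall j, (j < n)%nat -> Q j (f j).
Proof.
  induction n; intros H.
  - exists (fun _ => 0%nat). intros; lia.
  - destruct IHn as [f Hf]. { intros; apply H; lia. }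
    destruct (H n (Nat.lt_succ_diag_r n)) as [i Hi].
    exists (fun j => if Nat.eq_dec j n then i else f j). intros j Hj.
    destruct (Nat.eq_dec j n); [subst; auto|]. apply Hf; lia.
Qed.

Lemma sum_nb_conv {V} (nb : V -> list V) (y : V) (D : nat) (h : nat -> V) (f : V -> R) :
  Permutation (map h (seq 0 D)) (nb y) -> sum_nb nb y f = Sm D (fun j => f (h j)).
Proof.
  intros HP. unfold sum_nb. change (fold_right Rplus 0 (map f (nb y))) with (sumL f (nb y)).
  rewrite <- (sumL_perm f _ _ HP), sumL_map. reflexivity.
Qed.

Lemma Sm_ext n F G : (forall j, (j < n)%nat -> F j = G j) -> Sm n F = Sm n G.
Proof. intros H; apply sumL_ext; intros j Hj; apply H; apply in_seq0; auto. Qed.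

Lemma Sm_minus1 n F : Sm n (fun j => F j - 1) = Sm n F - INR n.
Proof. unfold Sm. rewrite sumL_minus, sumL_const, length_seq. ring. Qed.

Theorem corollary5p1 (V : Type) (nb : V -> list V) (D : nat) (mu0 alpha : R)
  (x0 : V) (psi v : V -> R) :
  ricci_flat nb D -> (2 <= D)%nat -> 0 < mu0 ->
  0 < alpha < 1 ->
  0 < psi x0 -> (forall y, adj nb x0 y -> 0 < psi y) ->
  let M := fun x => psi x * Lalpha nb mu0 alpha v x in
  0 < M x0 -> (forall y, adj nb x0 y -> M y <= M x0) ->
  Calpha nb mu0 alpha v x0 >=
    Falpha D mu0 alpha (Lop nb mu0 v x0)
    - / mu0 * Lalpha nb mu0 alpha v x0 *
      sum_nb nb x0 (fun y => exp (v y - v x0) * (Rabs (psi x0 - psi y) / psi y)).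
Proof.
  intros Hrf HD Hmu Hal Hpx Hpy M HM Hmax.
  destruct Hrf as [[Hnd [Hlen [Hsym Hirr]]] Hflat].
  destruct (Hflat x0) as [eta [H1 [H2 H3]]].
  set (y := fun j => eta j x0).
  set (z := fun i j => eta i (eta j x0)).
  assert (Hy : forall j, (j < D)%nat -> adj nb x0 (y j)).
  { intros j Hj. apply (H1 j x0 Hj (or_introl eq_refl)). }
  assert (Hz : forall i j, (i < D)%nat -> (j < D)%nat -> adj nb (y j) (z i j)).
  { intros i j Hi Hj. apply (H1 i (y j) Hi (or_intror (Hy j Hj))). }
  assert (PX : Permutation (map y (seq 0 D)) (nb x0)).
  { apply perm_decode; auto. intros i j Hi Hj Hij. apply (H2 i j x0 Hi Hj Hij (or_introl eq_refl)). }
  assert (PY : forall j, (j < D)%nat -> Permutation (map (fun i => z i j) (seq 0 D)) (nb (y j))).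
  { intros j Hj. apply perm_decode; auto. intros i k Hi Hk Hik. apply (H2 i k (y j) Hi Hk Hik (or_intror (Hy j Hj))). }
  assert (Hex : forall j, (j < D)%nat -> exists i, (i < D)%nat /\ z i j = x0).
  { intros j Hj. assert (In x0 (nb (y j))) by (apply Hsym; apply Hy; auto).
    apply (Permutation_in _ (Permutation_sym (PY j Hj))) in H.
    apply in_map_iff in H. destruct H as [i [Hzi Hi]]. exists i; split; auto. apply in_seq0; auto. }
  destruct (finite_choice D (fun j i => (i < D)%nat /\ z i j = x0) Hex) as [sg Hsg].
  assert (Hinj : forall j k, (j < D)%nat -> (k < D)%nat -> sg j = sg k -> j = k).
  { intros j k Hj Hk Hjk. destruct (Hsg j Hj) as [Hi Hzj]. destruct (Hsg k Hk) as [Hik Hzk].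
    rewrite Hjk in Hzj. set (i := sg k) in *.
    assert (NoDup (map (fun j => z i j) (seq 0 D))).
    { apply Permutation_NoDup with (map (fun j => eta j (eta i x0)) (seq 0 D)).
      - symmetry. apply (H3 i). exact Hik.
      - apply nodup_map_seq. intros a b Ha Hb Hab. apply (H2 a b (eta i x0) Ha Hb Hab).
        right. apply Hy. exact Hik. }
    apply (nodup_inj (fun j => z i j) (seq 0 D)); auto; try (apply in_seq0; auto).
    rewrite Hzj, Hzk. auto. }
  assert (Hperm : Permutation (map sg (seq 0 D)) (seq 0 D)).
  { apply Permutation_map_same_l.
    - apply NoDup_map_NoDup_ForallPairs; [|apply seq_NoDup].
      intros a b Ha Hb Hab. apply in_seq0 in Ha; apply in_seq0 in Hb. apply Hinj; auto.
    - intros w Hw. apply in_map_iff in Hw. destruct Hw as [j [<- Hj]]. apply in_seq0 in Hj.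
      apply in_seq0. apply Hsg; auto. }
  set (Bv := fun j => v (y j) - v x0).
  set (Cv := fun i j => v (z i j) - v x0).
  set (ev := fun j => Rabs (psi x0 - psi (y j)) / psi (y j)).
  set (Sa := Sm D (fun k => exp (alpha * Bv k))).
  assert (HDpos : 0 < INR D) by (apply lt_0_INR; lia).
  assert (Hmu' : mu0 <> 0) by lra.
  assert (Hal' : alpha <> 0) by lra.
  assert (ELx : Lalpha nb mu0 alpha v x0 = /alpha * /mu0 * (INR D - Sa)).
  { unfold Lalpha, PsiH, Upsilon'. rewrite (sum_nb_conv nb x0 D y _ PX).
    rewrite (Sm_ext D _ (fun j => exp (alpha * Bv j) - 1)) by (intros; unfold Bv; f_equal; f_equal; ring).
    rewrite Sm_minus1. fold Sa. field. auto. }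
  assert (ELy : forall j, (j < D)%nat -> Lalpha nb mu0 alpha v (y j) =
      /alpha * /mu0 * (INR D - Sm D (fun i => exp (alpha * (Cv i j - Bv j))))).
  { intros j Hj. unfold Lalpha, PsiH, Upsilon'. rewrite (sum_nb_conv nb (y j) D (fun i => z i j) _ (PY j Hj)).
    rewrite (Sm_ext D _ (fun i => exp (alpha * (Cv i j - Bv j)) - 1)) by (intros; unfold Bv, Cv; f_equal; f_equal; ring).
    rewrite Sm_minus1. field. auto. }
  assert (HLx : 0 < Lalpha nb mu0 alpha v x0).
  { unfold M in HM. apply Rmult_lt_reg_l with (psi x0); auto. lra. }
  assert (Hcon : forall j, (j < D)%nat -> Sm D (fun i => exp (alpha * Cv i j)) >=
       exp (alpha * Bv j) * (Sa - ev j * (INR D - Sa))).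
  { intros j Hj.
    set (Q := Sm D (fun i => exp (alpha * (Cv i j - Bv j)))).
    assert (EQ : Sm D (fun i => exp (alpha * Cv i j)) = exp (alpha * Bv j) * Q).
    { unfold Q, Sm. rewrite <- sumL_scal. apply sumL_ext. intros. rewrite <- exp_plus. f_equal. ring. }
    rewrite EQ.
    pose proof (Hmax (y j) (Hy j Hj)) as Hm. unfold M in Hm. rewrite ELy in Hm by auto. rewrite ELx in HLx, Hm.
    fold Q in Hm.
    set (p := psi x0) in *. set (q := psi (y j)) in *.
    assert (Hq : 0 < q) by (apply Hpy; apply Hy; auto).
    assert (He : p <= q * (1 + ev j)).
    { unfold ev. fold p q. assert (p - q <= Rabs (p - q)) by apply Rle_abs.
      replace (q * (1 + Rabs (p - q) / q)) with (q + Rabs (p - q)) by (field; lra). lra. }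
    assert (Hk : 0 < /alpha * /mu0) by (apply Rmult_lt_0_compat; apply Rinv_0_lt_compat; lra).
    set (k := /alpha * /mu0) in *.
    assert (INR D - Sa > 0) by (apply Rmult_lt_reg_l with k; lra).
    assert (q * (k * (INR D - Q)) <= q * ((1 + ev j) * (k * (INR D - Sa)))) by nra.
    assert (k * (INR D - Q) <= (1 + ev j) * (k * (INR D - Sa))) by (apply Rmult_le_reg_l with q; auto).
    assert (INR D - Q <= (1 + ev j) * (INR D - Sa)).
    { apply Rmult_le_reg_l with k; auto. lra. }
    assert (Q >= Sa - ev j * (INR D - Sa)) by lra.
    apply Rle_ge, Rmult_le_compat_l. left; apply exp_pos. lra. }
  assert (Hswap : forall i, (i < D)%nat -> Sm D (fun j => exp (alpha * Cv i j)) = Sm D (fun j => exp (alpha * Cv j i))).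
  { intros i Hi. pose proof (sumL_perm (fun w => exp (alpha * (v w - v x0))) _ _ (H3 i Hi)).
    rewrite !sumL_map in H. exact H. }
  assert (HC0 : forall j, (j < D)%nat -> Cv (sg j) j = 0).
  { intros j Hj. unfold Cv. destruct (Hsg j Hj) as [_ ->]. ring. }
  pose proof (core D alpha Bv Cv ev sg Hal ltac:(lia) Hperm (fun j Hj => proj1 (Hsg j Hj)) HC0 Hcon Hswap) as Hcore.
  fold Sa in Hcore.
  assert (ECal : Calpha nb mu0 alpha v x0 = /mu0 * /mu0 *
      (Sm D (fun j => Sm D (fun i => exp (Cv i j - (1 - alpha) * Bv j))) - Sa * Sm D (fun k => exp (Bv k)))).
  { unfold Calpha, PsiH, Upsilon'. rewrite (sum_nb_conv nb x0 D y _ PX).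
    rewrite (Sm_ext D _ (fun j => /mu0 * (Sm D (fun i => exp (Cv i j - (1 - alpha) * Bv j))
        - exp (alpha * Bv j) * Sm D (fun k => exp (Bv k))))).
    - unfold Sm. rewrite sumL_scal, sumL_minus.
      rewrite (sumL_ext (fun j => exp (alpha * Bv j) * sumL (fun k => exp (Bv k)) (seq 0 D))
                        (fun j => sumL (fun k => exp (Bv k)) (seq 0 D) * exp (alpha * Bv j))) by (intros; ring).
      rewrite sumL_scal. fold (Sm D (fun k => exp (alpha * Bv k))). fold Sa. unfold Sm. field. auto.
    - intros j Hj.
      assert (E1 : sum_nb nb (y j) (fun y0 => exp (v y0 - v (y j)) - 1) = Sm D (fun i => exp (Cv i j - Bv j)) - INR D).
      { rewrite (sum_nb_conv nb (y j) D (fun i => z i j) _ (PY j Hj)). rewrite <- Sm_minus1.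
        apply Sm_ext. intros; cbv beta; unfold Cv, Bv; f_equal; f_equal; ring. }
      assert (E2 : sum_nb nb x0 (fun y0 => exp (v y0 - v x0) - 1) = Sm D (fun k => exp (Bv k)) - INR D).
      { rewrite (sum_nb_conv nb x0 D y _ PX). rewrite <- Sm_minus1. apply Sm_ext. intros; reflexivity. }
      rewrite E1, E2. change (v (y j) - v x0) with (Bv j).
      assert (exp (alpha * Bv j) * Sm D (fun i => exp (Cv i j - Bv j)) = Sm D (fun i => exp (Cv i j - (1 - alpha) * Bv j))).
      { unfold Sm. rewrite <- sumL_scal. apply sumL_ext. intros. rewrite <- exp_plus. f_equal. ring. }
      rewrite <- H. field. auto. }
  assert (EErr : sum_nb nb x0 (fun y0 => exp (v y0 - v x0) * (Rabs (psi x0 - psi y0) / psi y0)) =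
      Sm D (fun i => exp (Bv i) * ev i)).
  { rewrite (sum_nb_conv nb x0 D y _ PX). reflexivity. }
  assert (ELop : Lop nb mu0 v x0 = - /mu0 * Sm D Bv).
  { unfold Lop, Laplacian. rewrite (sum_nb_conv nb x0 D y _ PX). unfold Bv. ring. }
  assert (EF : Falpha D mu0 alpha (Lop nb mu0 v x0) = /mu0 * /mu0 * (INR D * mm alpha (2 * (- Sm D Bv / INR D)))).
  { rewrite ELop. unfold Falpha, mm. set (SB := Sm D Bv).
    assert (e1 : exp (- (mu0 * (1 - alpha) / INR D) * (- / mu0 * SB)) * exp (2 * (1 - alpha) * mu0 / INR D * (- / mu0 * SB))
        = exp ((1 - alpha) / 2 * (2 * (- SB / INR D)))) by (rewrite <- exp_plus; f_equal; field; lra).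
    assert (e2 : exp (- (mu0 * (1 - alpha) / INR D) * (- / mu0 * SB)) * exp (- (2 * alpha * mu0 / INR D) * (- / mu0 * SB))
        = exp (- ((1 + alpha) / 2) * (2 * (- SB / INR D)))) by (rewrite <- exp_plus; f_equal; field; lra).
    assert (e3 : exp (- (mu0 * (1 - alpha) / INR D) * (- / mu0 * SB)) = exp (- ((1 - alpha) / 2) * (2 * (- SB / INR D))))
      by (f_equal; field; lra).
    set (E0 := exp (- (mu0 * (1 - alpha) / INR D) * (- / mu0 * SB))) in *.
    replace (INR D / mu0 ^ 2 * E0 * (exp (2 * (1 - alpha) * mu0 / INR D * (- / mu0 * SB)) +
       (1 - alpha) / alpha * exp (- (2 * alpha * mu0 / INR D) * (- / mu0 * SB)) - / alpha))
     with (INR D / mu0 ^ 2 * (E0 * exp (2 * (1 - alpha) * mu0 / INR D * (- / mu0 * SB)) +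
       (1 - alpha) / alpha * (E0 * exp (- (2 * alpha * mu0 / INR D) * (- / mu0 * SB))) - / alpha * E0)) by ring.
    rewrite e1, e2, e3. field. auto. }
  rewrite ECal, EF, EErr, ELx.
  assert (0 < /mu0 * /mu0) by (apply Rmult_lt_0_compat; apply Rinv_0_lt_compat; lra).
  apply Rle_ge.
  replace (/ mu0 * / mu0 * (INR D * mm alpha (2 * (- Sm D Bv / INR D))) -
     / mu0 * (/ alpha * / mu0 * (INR D - Sa)) * Sm D (fun i => exp (Bv i) * ev i))
    with (/ mu0 * / mu0 * (INR D * mm alpha (2 * (- Sm D Bv / INR D)) - / alpha * (INR D - Sa) * Sm D (fun i => exp (Bv i) * ev i))) by ring.
  apply Rmult_le_compat_l; lra.
Qed.
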